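(* Let $M$ be a smooth manifold with a symmetric affine connection $\nabla$, Riemann tensor $R_{abc}{}^d$ and Ricci tensor $R_{ab}$. Then $$\nabla_a\nabla_m R_{bec}{}^m - \nabla_b\nabla_mR_{ace}{}^m + \nabla_c\nabla_m R_{eba}{}^m - \nabla_e\nabla_m R_{cab}{}^m = R_{am} R_{bec}{}^m - R_{bm}R_{ace}{}^m + R_{cm} R_{eba}{}^m -R_{em} R_{cab}{}^m .$$
   Context: Abstract index notation with Einstein summation. The connection has symmetric Christoffel symbols $\Gamma^c_{ab}$; $R_{abc}{}^d = \partial_a \Gamma_{bc}^d - \partial_b\Gamma_{ac}^d - \Gamma_{ac}^k\Gamma_{bk}^d + \Gamma_{ak}^d \Gamma_{bc}^k$ and $R_{ac}=R_{abc}{}^b$. *)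

(* Defs.v *)
From HB Require Import structures.
From mathcomp Require Import all_boot all_order all_algebra.
Set Implicit Arguments. Unset Strict Implicit. Unset Printing Implicit Defensive.
Import GRing.Theory.
Local Open Scope ring_scope.

(* R : ring of (smooth) functions on a coordinate chart, n = dimension,
   d a : R -> R  the coordinate partial derivative  ∂_a,
   G c a b = Γ^c_{ab}  (Christoffel symbols).  *)

Definition Riem (R : comNzRingType) (n : nat) (d : 'I_n -> R -> R)
  (G : 'I_n -> 'I_n -> 'I_n -> R) (a b c dd : 'I_n) : R :=
  d a (G dd b c) - d b (G dd a c)
  - \sum_(k < n) G k a c * G dd b k + \sum_(k < n) G dd a k * G k b c.

Definition Ric (R : comNzRingType) (n : nat) (d : 'I_n -> R -> R)
  (G : 'I_n -> 'I_n -> 'I_n -> R) (a c : 'I_n) : R :=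
  \sum_(b < n) Riem d G a b c b.

Definition nabla31 (R : comNzRingType) (n : nat) (d : 'I_n -> R -> R)
  (G : 'I_n -> 'I_n -> 'I_n -> R) (T : 'I_n -> 'I_n -> 'I_n -> 'I_n -> R)
  (a b e c m : 'I_n) : R :=
  d a (T b e c m)
  - \sum_(k < n) (G k a b * T k e c m + G k a e * T b k c m + G k a c * T b e k m)
  + \sum_(k < n) G m a k * T b e c k.

Definition nabla03 (R : comNzRingType) (n : nat) (d : 'I_n -> R -> R)
  (G : 'I_n -> 'I_n -> 'I_n -> R) (S : 'I_n -> 'I_n -> 'I_n -> R)
  (a b e c : 'I_n) : R :=
  d a (S b e c)
  - \sum_(k < n) (G k a b * S k e c + G k a e * S b k c + G k a c * S b e k).

Definition divRiem (R : comNzRingType) (n : nat) (d : 'I_n -> R -> R)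
  (G : 'I_n -> 'I_n -> 'I_n -> R) (b e c : 'I_n) : R :=
  \sum_(m < n) nabla31 d G (Riem d G) m b e c m.

(* Main.v *)
Require Import Defs.
From HB Require Import structures.
From mathcomp Require Import all_boot all_order all_algebra.
Import GRing.Theory.
Local Open Scope ring_scope.

(* Proof by reflection: both sides are reified into a small
   syntax of differential-polynomial expressions, expanded into signed
   monomial sums, and monomials are compared up to renaming of bound indices,
   symmetry of Christoffel symbols, and commutation of partial derivatives. *)

Module Refl.
Set Implicit Arguments. Unset Strict Implicit. Unset Printing Implicit Defensive.

Definition idx := (bool * nat)%type.            (* (true,j): bound level j ; (false,j): free var j *)
Definition atom := (seq idx * idx * idx * idx)%type.  (* derivs, c, a, b  :  d_dl G c a b *)
Definition mono := (nat * bool * seq atom)%type.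

Inductive ex :=
| EG of seq idx & idx & idx & idx
| EAdd of ex & ex
| ENeg of ex
| EMul of ex & ex
| ESum of ex
| ED of idx & ex.

Definition shi (base k : nat) (x : idx) : idx :=
  if x.1 && (base <= x.2)%N then (true, (x.2 + k)%N) else x.
Definition sha (base k : nat) (x : atom) : atom :=
  let: (dl, c, a, b) := x in (map (shi base k) dl, shi base k c, shi base k a, shi base k b).
Definition datom (j : idx) (x : atom) : atom :=
  let: (dl, c, a, b) := x in (j :: dl, c, a, b).
Fixpoint leib (j : idx) (l : seq atom) : seq (seq atom) :=
  if l is x :: l' then (datom j x :: l') :: [seq x :: l2 | l2 <- leib j l'] else [::].
Definition flipm (m : mono) : mono := let: (k, s, l) := m in (k, ~~ s, l).
Definition liftm (m : mono) : mono := let: (k, s, l) := m in (k.+1, s, l).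
Definition mulm (base : nat) (m1 m2 : mono) : mono :=
  let: (k1, s1, l1) := m1 in let: (k2, s2, l2) := m2 in
  ((k1 + k2)%N, s1 (+) s2, map (sha (base + k1) k2) l1 ++ map (sha base k1) l2).
Definition derm (base : nat) (i : idx) (m : mono) : seq mono :=
  let: (k, s, l) := m in [seq (k, s, l2) | l2 <- leib (shi base k i) l].

Fixpoint norm (base : nat) (e : ex) : seq mono :=
  match e with
  | EG dl c a b => [:: (0%N, false, [:: (dl, c, a, b)])]
  | EAdd e1 e2 => norm base e1 ++ norm base e2
  | ENeg e1 => map flipm (norm base e1)
  | EMul e1 e2 => [seq mulm base m1 m2 | m1 <- norm base e1, m2 <- norm base e2]
  | ESum e1 => map liftm (norm base.+1 e1)
  | ED i e1 => flatten [seq derm base i m | m <- norm base e1]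
  end.

Definition enc (x : idx) : nat := (x.2.*2 + x.1)%N.
Fixpoint lexle (s t : seq nat) : bool :=
  match s, t with
  | [::], _ => true
  | _ :: _, [::] => false
  | x :: s', y :: t' => (x < y)%N || ((x == y) && lexle s' t')
  end.
Definition encat (x : atom) : seq nat :=
  let: (dl, c, a, b) := x in size dl :: map enc dl ++ [:: enc c; enc a; enc b].
Definition idxle (x y : idx) : bool := (enc x <= enc y)%N.
Definition normat (x : atom) : atom :=
  let: (dl, c, a, b) := x in
  (sort idxle dl, c, if (enc b < enc a)%N then b else a, if (enc b < enc a)%N then a else b).
Definition atle (x y : atom) : bool := lexle (encat x) (encat y).
Definition ren (k : nat) (q : seq nat) (x : idx) : idx :=
  if x.1 && (x.2 < k)%N then (true, nth 0%N q x.2) else x.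
Definition rena (k : nat) (q : seq nat) (x : atom) : atom :=
  let: (dl, c, a, b) := x in (map (ren k q) dl, ren k q c, ren k q a, ren k q b).
Definition cand (k : nat) (l : seq atom) (q : seq nat) : seq atom :=
  sort atle (map normat (map (rena k q) l)).
Definition pickmin (x0 : seq atom) (cs : seq (seq atom)) : seq atom :=
  foldl (fun acc c => if lexle (flatten (map encat c)) (flatten (map encat acc)) then c else acc) x0 cs.
Definition canon (m : mono) : mono :=
  let: (k, s, l) := m in
  (k, s, pickmin (cand k l (iota 0 k)) [seq cand k l q | q <- permutations (iota 0 k)]).
Definition check (L : seq mono) : bool :=
  all (fun m => count_mem m L == count_mem (flipm m) L) L.


Definition Bd (j : nat) : idx := (true, j).
Definition g0 c a b := EG [::] c a b.
Definition ESub x y := EAdd x (ENeg y).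
Definition rRiem (L : nat) (a b c dd : idx) : ex :=
  EAdd (ESub (ESub (ED a (g0 dd b c)) (ED b (g0 dd a c)))
             (ESum (EMul (g0 (Bd L) a c) (g0 dd b (Bd L)))))
       (ESum (EMul (g0 dd a (Bd L)) (g0 (Bd L) b c))).
Definition rRic (L : nat) (a c : idx) : ex := ESum (rRiem L.+1 a (Bd L) c (Bd L)).
Definition rn31 (L : nat) (a b e c m : idx) : ex :=
  EAdd (ESub (ED a (rRiem L b e c m))
             (ESum (EAdd (EAdd (EMul (g0 (Bd L) a b) (rRiem L.+1 (Bd L) e c m))
                               (EMul (g0 (Bd L) a e) (rRiem L.+1 b (Bd L) c m)))
                         (EMul (g0 (Bd L) a c) (rRiem L.+1 b e (Bd L) m)))))
       (ESum (EMul (g0 m a (Bd L)) (rRiem L.+1 b e c (Bd L)))).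
Definition rdiv (L : nat) (b e c : idx) : ex := ESum (rn31 L.+1 (Bd L) b e c (Bd L)).
Definition rn03 (L : nat) (a b e c : idx) : ex :=
  ESub (ED a (rdiv L b e c))
       (ESum (EAdd (EAdd (EMul (g0 (Bd L) a b) (rdiv L.+1 (Bd L) e c))
                         (EMul (g0 (Bd L) a e) (rdiv L.+1 b (Bd L) c)))
                   (EMul (g0 (Bd L) a c) (rdiv L.+1 b e (Bd L))))).
Definition fa : idx := (false, 0%N).
Definition fb : idx := (false, 1%N).
Definition fc : idx := (false, 2%N).
Definition fe : idx := (false, 3%N).
Definition EL : ex := EAdd (ESub (EAdd (ESub (rn03 0 fa fb fe fc) (rn03 0 fb fa fc fe)) (rn03 0 fc fe fb fa)) (rn03 0 fe fc fa fb)) (ENeg (ENeg (EG [::] fa fa fa))).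
Definition ER : ex := ESum (ESub (EAdd (ESub (EMul (rRic 1 fa (Bd 0)) (rRiem 1 fb fe fc (Bd 0)))
                                              (EMul (rRic 1 fb (Bd 0)) (rRiem 1 fa fc fe (Bd 0))))
                                        (EMul (rRic 1 fc (Bd 0)) (rRiem 1 fe fb fa (Bd 0))))
                                  (EMul (rRic 1 fe (Bd 0)) (rRiem 1 fc fa fb (Bd 0)))).
Definition EALL := ESub (ESub (EAdd (ESub (rn03 0 fa fb fe fc) (rn03 0 fb fa fc fe)) (rn03 0 fc fe fb fa)) (rn03 0 fe fc fa fb)) ER.


Section Sem.
Variable R : comNzRingType.
Variable n : nat.
Variable d : 'I_n -> R -> R.
Hypothesis d_add : forall i x y, d i (x + y) = d i x + d i y.
Hypothesis d_mul : forall i x y, d i (x * y) = d i x * y + x * d i y.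
Hypothesis d_comm : forall i j x, d i (d j x) = d j (d i x).
Variable G : 'I_n -> 'I_n -> 'I_n -> R.
Hypothesis G_sym : forall c a b, G c a b = G c b a.
Variable a0 : 'I_n.
Variable fv : seq 'I_n.

Lemma d0 i : d i 0 = 0.
Proof. have := d_add i 0 0; rewrite addr0 => /(congr1 (fun z => z - d i 0)) /=. by rewrite subrr addrK. Qed.
Lemma dN i x : d i (- x) = - d i x.
Proof. have := d_add i (-x) x; rewrite addNr d0 => /eqP; rewrite eq_sym addr_eq0 => /eqP //. Qed.
Lemma d1 i : d i 1 = 0.
Proof. have := d_mul i 1 1; rewrite !mul1r mulr1 => /(congr1 (fun z => z - d i 1)) /=. by rewrite subrr addrK. Qed.

Definition ixv (env : seq 'I_n) (x : idx) : 'I_n :=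
  if x.1 then nth a0 env x.2 else nth a0 fv x.2.
Definition ia (env : seq 'I_n) (x : atom) : R :=
  let: (dl, c, a, b) := x in foldr (fun i y => d (ixv env i) y) (G (ixv env c) (ixv env a) (ixv env b)) dl.

Fixpoint ev (env : seq 'I_n) (e : ex) : R :=
  match e with
  | EG dl c a b => ia env (dl, c, a, b)
  | EAdd e1 e2 => ev env e1 + ev env e2
  | ENeg e1 => - ev env e1
  | EMul e1 e2 => ev env e1 * ev env e2
  | ESum e1 => \sum_(k < n) ev (rcons env k) e1
  | ED i e1 => d (ixv env i) (ev env e1)
  end.

Definition msum (k : nat) (F : seq 'I_n -> R) : R := \sum_(t : k.-tuple 'I_n) F t.
Definition im (env : seq 'I_n) (m : mono) : R :=
  let: (k, s, l) := m in (-1) ^+ s * msum k (fun t => \prod_(x <- l) ia (env ++ t) x).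

Lemma msum0 F : msum 0 F = F [::].
Proof.
rewrite /msum (big_pred1 [tuple]) // => t /=.
by apply/esym/eqP/val_inj; case: t => [[]].
Qed.

Lemma msumS k F : msum k.+1 F = \sum_(i < n) msum k (fun t => F (i :: t)).
Proof.
rewrite /msum.
rewrite (reindex (fun p : 'I_n * k.-tuple 'I_n => [tuple of p.1 :: p.2])) /=.
  by rewrite -(pair_bigA _ (fun i (t : k.-tuple 'I_n) => F (i :: t))).
exists (fun t : k.+1.-tuple 'I_n => (thead t, [tuple of behead t])).
  by move=> [i t] _ /=; congr (_, _); apply: val_inj.
by move=> t _; apply: val_inj => /=; rewrite [in RHS](tuple_eta t).
Qed.

Lemma msumM k1 k2 F H :
  msum k1 F * msum k2 H = msum (k1 + k2) (fun t => F (take k1 t) * H (drop k1 t)).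
Proof.
elim: k1 F => [|k1 IH] F.
  by rewrite msum0 add0n /msum mulr_sumr; apply: eq_bigr => t _; rewrite take0 drop0.
rewrite addSn !msumS mulr_suml; apply: eq_bigr => i _.
by rewrite IH.
Qed.

Lemma msum_d i k F : d i (msum k F) = msum k (fun t => d i (F t)).
Proof. exact: (big_morph (d i) (d_add i) (d0 i)). Qed.

Lemma ixv_shift pre mid post x :
  ixv (pre ++ mid ++ post) (shi (size pre) (size mid) x) = ixv (pre ++ post) x.
Proof.
case: x => [[] j] //=; rewrite /shi /ixv /=.
case: leqP => hj /=.
  have h1 : (j + size mid < size pre)%N = false.
    by apply/negbTE; rewrite -leqNgt (leq_trans hj) ?leq_addr.
  have h2 : (j < size pre)%N = false by apply/negbTE; rewrite -leqNgt.
  rewrite nth_cat h1 [RHS]nth_cat h2 -addnBAC // nth_cat ltnNge leq_addl /=.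
  by rewrite addnK.
by rewrite !nth_cat hj.
Qed.

Lemma ixv_shiftk env k (t : k.-tuple 'I_n) i :
  ixv (env ++ t) (shi (size env) k i) = ixv env i.
Proof. by have := ixv_shift env t [::] i; rewrite !cats0 size_tuple. Qed.

Lemma ia_shift pre mid post x :
  ia (pre ++ mid ++ post) (sha (size pre) (size mid) x) = ia (pre ++ post) x.
Proof.
case: x => [[[dl c] a] b] /=.
rewrite !ixv_shift; elim: dl => [|i dl IH] //=.
by rewrite ixv_shift IH.
Qed.

Lemma sgn_d i (s : bool) X : d i ((-1) ^+ s * X) = (-1) ^+ s * d i X.
Proof. by case: s; rewrite ?expr1 ?expr0 ?mulN1r ?mul1r // dN. Qed.

Lemma leibP env j l :
  d (ixv env j) (\prod_(x <- l) ia env x) = \sum_(l2 <- leib j l) \prod_(x <- l2) ia env x.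
Proof.
elim: l => [|x l IH] /=; first by rewrite big_nil d1 big_nil.
rewrite big_cons d_mul IH big_cons big_cons big_map mulr_sumr; congr (_ + _).
  by case: x => [[[dl c] a] b].
by apply: eq_bigr => l2 _; rewrite big_cons.
Qed.

Lemma normP e : forall base env, size env = base ->
  ev env e = \sum_(m <- norm base e) im env m.
Proof.
elim: e => [dl c a b|e1 IH1 e2 IH2|e1 IH1|e1 IH1 e2 IH2|e1 IH1|i e1 IH1] base env Hs /=.
- by rewrite big_seq1 /= msum0 big_seq1 cats0 expr0 mul1r.
- by rewrite big_cat (IH1 base) // (IH2 base).
- rewrite (IH1 base) // big_map -sumrN; apply: eq_bigr => [[[k s] l]] _ /=.
  by rewrite signrN mulNr.
- rewrite (IH1 base) // (IH2 base) // big_allpairs_dep mulr_suml; apply: eq_bigr => m1 _.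
  rewrite mulr_sumr; apply: eq_bigr => m2 _.
  case: m1 => [[k1 s1] l1]; case: m2 => [[k2 s2] l2] /=.
  rewrite mulrACA -signr_addb msumM; congr (_ * _); rewrite /msum; apply: eq_bigr => t _.
  rewrite big_cat /= !big_map; congr (_ * _); apply: eq_bigr => x _.
    have -> : env ++ t = (env ++ take k1 t) ++ drop k1 t ++ [::].
      by rewrite cats0 -catA cat_take_drop.
    have H1 : size (env ++ take k1 t) = (base + k1)%N.
      by rewrite size_cat Hs size_takel // size_tuple leq_addr.
    have H2 : size (drop k1 t) = k2 by rewrite size_drop size_tuple addKn.
    by have := ia_shift (env ++ take k1 t) (drop k1 t) [::] x; rewrite H1 H2 => ->; rewrite cats0.
  have -> : env ++ t = env ++ take k1 t ++ drop k1 t by rewrite cat_take_drop.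
  have H2 : size (take k1 t) = k1.
    by rewrite size_takel // size_tuple leq_addr.
  by have := ia_shift env (take k1 t) (drop k1 t) x; rewrite H2 Hs => ->.
- rewrite big_map.
  under eq_bigr => k _ do rewrite (IH1 base.+1) ?size_rcons ?Hs //.
  rewrite exchange_big /=; apply: eq_bigr => [[[k s] l]] _ /=.
  rewrite msumS mulr_sumr; apply: eq_bigr => j _.
  by congr (_ * _); rewrite /msum; apply: eq_bigr => t _; rewrite cat_rcons.
- rewrite (IH1 base) // (big_morph (d (ixv env i)) (d_add _) (d0 _)).
  rewrite big_flatten /= big_map; apply: eq_bigr => [[[k s] l]] _ /=.
  rewrite sgn_d msum_d big_map /msum -Hs.
  have E (u : k.-tuple 'I_n) : d (ixv env i) (\prod_(x <- l) ia (env ++ u) x) =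
      \sum_(l2 <- leib (shi (size env) k i) l) \prod_(x <- l2) ia (env ++ u) x.
    by rewrite -(ixv_shiftk env u i) leibP.
  rewrite (eq_bigr _ (fun u _ => E u)).
  rewrite exchange_big mulr_sumr; apply: eq_bigr => l2 _ //.
Qed.

Lemma foldr_perm (f : idx -> R -> R) (fC : forall i j y, f i (f j y) = f j (f i y)) y :
  forall l1 l2, perm_eq l1 l2 -> foldr f y l1 = foldr f y l2.
Proof.
have mv : forall l l' x, foldr f y (l ++ x :: l') = f x (foldr f y (l ++ l')).
  by elim=> //= z l IH l' x; rewrite IH fC.
elim=> [|x l1 IH] l2 /=.
  by move=> /perm_size /= /esym/size0nil ->.
move=> H; have Hx : x \in l2 by rewrite -(perm_mem H) mem_head.
case/splitPr: Hx H => l2a l2b H.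
rewrite mv; congr (f x _); apply: IH.
rewrite -(perm_cons x); apply: perm_trans H _.
by apply/permPl; exact: (perm_catCA l2a [:: x] l2b).
Qed.

Lemma ia_normat env x : ia env (normat x) = ia env x.
Proof.
case: x => [[[dl c] a] b] /=.
have fC : forall i j (y : R), (fun i y => d (ixv env i) y) i ((fun i y => d (ixv env i) y) j y) =
   (fun i y => d (ixv env i) y) j ((fun i y => d (ixv env i) y) i y) by move=> *; rewrite /= d_comm.
have Ps : perm_eq (sort idxle dl) dl by rewrite perm_sort perm_refl.
rewrite (foldr_perm fC _ Ps).
by case: ifP => // _; rewrite G_sym.
Qed.

Definition ptup (k : nat) (q : seq nat) (t : seq 'I_n) : seq 'I_n :=
  [seq nth a0 t (nth 0%N q j) | j <- iota 0 k].

Lemma nth_ptup k q t j : nth a0 (ptup k q t) j = if (j < k)%N then nth a0 t (nth 0%N q j) else a0.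
Proof.
case: ltnP => hj.
  by rewrite (nth_map 0%N) ?size_iota // nth_iota.
by rewrite nth_default // size_map size_iota.
Qed.

Lemma ixv_ren k q (t : seq 'I_n) x : size t = k -> ixv t (ren k q x) = ixv (ptup k q t) x.
Proof.
move=> Ht; case: x => [[] j] //=; rewrite /ren /ixv /= nth_ptup.
case: ltnP => //= hj; by rewrite nth_default // Ht.
Qed.

Lemma ia_rena k q (t : seq 'I_n) x : size t = k -> ia t (rena k q x) = ia (ptup k q t) x.
Proof.
move=> Ht; case: x => [[[dl c] a] b] /=.
rewrite !ixv_ren //; elim: dl => [|i dl IH] //=.
by rewrite ixv_ren // IH.
Qed.

Lemma size_ptup k q t : size (ptup k q t) == k.
Proof. by rewrite size_map size_iota. Qed.

Definition ptupT k q (t : k.-tuple 'I_n) : k.-tuple 'I_n := Tuple (size_ptup k q t).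

Lemma ptupT_inj k q : perm_eq q (iota 0 k) -> injective (@ptupT k q).
Proof.
move=> Hq t1 t2 /(congr1 val) /= E.
apply: val_inj; apply: (@eq_from_nth _ a0); first by rewrite !size_tuple.
move=> j; rewrite size_tuple => hj.
have jq : j \in q by rewrite (perm_mem Hq) mem_iota.
have := congr1 (fun s => nth a0 s (index j q)) E; rewrite !nth_ptup.
have -> : (index j q < k)%N by rewrite -(size_iota 0 k) -(perm_size Hq) index_mem.
by rewrite nth_index.
Qed.

Lemma msum_perm k q F : perm_eq q (iota 0 k) ->
  msum k F = msum k (fun t => F (ptup k q t)).
Proof.
move=> Hq; rewrite /msum (reindex_inj (ptupT_inj Hq)) //.
Qed.

Lemma cand_ok k l q : q \in permutations (iota 0 k) ->
  msum k (fun t => \prod_(x <- cand k l q) ia t x) = msum k (fun t => \prod_(x <- l) ia t x).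
Proof.
rewrite mem_permutations => Hq.
rewrite [RHS](msum_perm _ Hq) /msum; apply: eq_bigr => t _.
have Ps : perm_eq (sort atle (map normat (map (rena k q) l))) (map normat (map (rena k q) l)).
  by rewrite perm_sort perm_refl.
rewrite /cand (perm_big _ Ps) !big_map; apply: eq_bigr => x _.
by rewrite ia_normat ia_rena ?size_tuple.
Qed.

Lemma pickminP (P : seq atom -> Prop) x0 cs :
  P x0 -> (forall c, c \in cs -> P c) -> P (pickmin x0 cs).
Proof.
rewrite /pickmin; elim: cs x0 => [|c cs IH] x0 //= H0 Hc.
apply: IH; last by move=> c' hc'; apply: Hc; rewrite in_cons hc' orbT.
by case: ifP => // _; apply: Hc; rewrite mem_head.
Qed.

Lemma canonP m : im [::] (canon m) = im [::] m.
Proof.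
case: m => [[k s] l] /=; congr (_ * _).
apply: (pickminP (P := fun c => msum k (fun t => \prod_(x <- c) ia t x) = msum k (fun t => \prod_(x <- l) ia t x))).
  by apply: cand_ok; rewrite mem_permutations.
by move=> c /mapP [q Hq ->]; apply: cand_ok.
Qed.

Lemma im_flip env m : im env (flipm m) = - im env m.
Proof. by case: m => [[k s] l] /=; rewrite signrN mulNr. Qed.

Lemma pair0 (T : eqType) (f : T -> T) (v : T -> R) :
  (forall x, f (f x) = x) -> (forall x, f x != x) -> (forall x, v (f x) = - v x) ->
  forall L, (forall x, count_mem x L = count_mem (f x) L) -> \sum_(x <- L) v x = 0.
Proof.
move=> ff fx vf L; elim: {L}(size L).+1 {-2}L (ltnSn (size L)) => // N IH [|x L] /= hs hc.
  by rewrite big_nil.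
have hfx : f x \in L.
  have := hc x; rewrite /= eqxx eq_sym (negbTE (fx x)) add0n => H.
  by rewrite -has_pred1 has_count -H add1n.
have P : perm_eq (x :: L) (x :: f x :: rem (f x) L) by rewrite perm_cons perm_to_rem.
rewrite (perm_big _ P) !big_cons vf /= addNKr.
apply: IH; first by move: hs; rewrite ltnS => hs; rewrite size_rem // (leq_ltn_trans (leq_pred _) hs).
move=> y; have := hc y; rewrite !(permP (perm_to_rem hfx)) /=.
have -> : (x == f y) = (f x == y) by apply/eqP/eqP => [->|<-]; rewrite ff.
have -> : (f x == f y) = (x == y) by apply/eqP/eqP => [/(congr1 f)|->]; rewrite ?ff.
by rewrite addnCA => /eqP; rewrite !eqn_add2l => /eqP.
Qed.

Lemma main_zero E : check (map canon (norm 0 E)) -> ev [::] E = 0.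
Proof.
move=> H; rewrite (@normP E 0%N [::]) //.
have -> : \sum_(m <- norm 0 E) im [::] m = \sum_(m <- map canon (norm 0 E)) im [::] m.
  by rewrite big_map; apply: eq_bigr => m _; rewrite canonP.
apply: (@pair0 _ flipm (im [::])).
- by case=> [[k s] l] /=; rewrite negbK.
- by case=> [[k s] l] /=; apply/eqP => -[] /eqP; case: s.
- exact: im_flip.
move=> y; move: H; rewrite /check; set L := map canon _ => /allP H.
have fl : flipm (flipm y) = y by case: y => [[k s] l] /=; rewrite negbK.
case: (boolP (y \in L)) => hy; first by apply/eqP; apply: H.
case: (boolP (flipm y \in L)) => hfy.
  by have := H _ hfy; rewrite fl => /eqP <-.
by rewrite (count_memPn hy) (count_memPn hfy).
Qed.
End Sem.

End Refl.

Theorem mainTheorem5 (R : comNzRingType) (n : nat)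
  (d : 'I_n -> R -> R)
  (d_add : forall i x y, d i (x + y) = d i x + d i y)
  (d_mul : forall i x y, d i (x * y) = d i x * y + x * d i y)
  (d_comm : forall i j x, d i (d j x) = d j (d i x))
  (G : 'I_n -> 'I_n -> 'I_n -> R)
  (G_sym : forall c a b, G c a b = G c b a) :
  forall a b c e : 'I_n,
    nabla03 d G (divRiem d G) a b e c - nabla03 d G (divRiem d G) b a c e
  + nabla03 d G (divRiem d G) c e b a - nabla03 d G (divRiem d G) e c a b
  = \sum_(m < n) (Ric d G a m * Riem d G b e c m - Ric d G b m * Riem d G a c e m
                 + Ric d G c m * Riem d G e b a m - Ric d G e m * Riem d G c a b m).
Proof.
move=> a b c e.
have CH : Refl.check (map Refl.canon (Refl.norm 0 Refl.EALL)) by vm_compute.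
have H := Refl.main_zero d_add d_mul d_comm G_sym a [:: a; b; c; e] CH.
by apply/eqP; rewrite -subr_eq0; apply/eqP; exact: H.
Qed.
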